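(* Let $V>0$. Then $\mathcal{C}(V,T,\bar P)\subseteq\hat{\mathcal{C}}(\bar P)$ for every $T>0$, and as $T\to\infty$ the capacity region $\mathcal{C}(V,T,\bar P)$ tends to $\hat{\mathcal{C}}(\bar P)=\{(r_1,r_2): r_1+r_2\le\log_2(1+\bar P\beta_0/H^2),\ r_1,r_2\ge0\}$, i.e. $\mathcal{C}(V,\infty,\bar P)=\hat{\mathcal{C}}(\bar P)$: every point of $\hat{\mathcal{C}}(\bar P)$ is the limit as $T\to\infty$ of rate pairs in $\mathcal{C}(V,T,\bar P)$. Moreover, this limit is achieved by hover-fly-hover (HFH) trajectories with $x_{\rm I}=-D/2$ and $x_{\rm F}=D/2$ combined with TDMA-based transmission; that is, TDMA is capacity-achieving in this limit.
   Context: Fix $D>0$, $H>0$, $\beta_0>0$, $\bar P>0$. Ground users GU 1, GU 2 are at $x_1=-D/2$, $x_2=D/2$; for UAV horizontal position $x$ (altitude $H$), $h_k(x)=\beta_0/((x-x_k)^2+H^2)$. For $T>0$, $V\ge0$: a feasible trajectory is $x:[0,T]\to\mathbb{R}$ with $|\dot x(t)|\le V$; a feasible power allocation is measurable $p_1,p_2\ge0$ with $p_1(t)+p_2(t)\le\bar P$. $\mathcal{C}(x,p)$ is the set of $(r_1,r_2)$, $r_1,r_2\ge0$, with $r_1\le\frac1T\int_0^T\log_2(1+p_1h_1(x))dt$, $r_2\le\frac1T\int_0^T\log_2(1+p_2h_2(x))dt$, $r_1+r_2\le\frac1T\int_0^T\log_2(1+p_1h_1(x)+p_2h_2(x))dt$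 (arguments $t$ suppressed). $\mathcal{C}(V,T,\bar P)$ is the union of $\mathcal{C}(x,p)$ over feasible $x,p$. An HFH trajectory with parameters $-D/2\le x_{\rm I}\le x_{\rm F}\le D/2$, $t_{\rm I},t_{\rm F}\ge0$, $t_{\rm I}+(x_{\rm F}-x_{\rm I})/V+t_{\rm F}=T$, is $x(t)=x_{\rm I}$ for $t\in[0,t_{\rm I}]$, $x(t)=x_{\rm I}+(t-t_{\rm I})V$ for $t\in(t_{\rm I},T-t_{\rm F})$, $x(t)=x_{\rm F}$ for $t\in[T-t_{\rm F},T]$. TDMA-based transmission means that at each time at most one user is served with power $\bar P$, i.e. $(p_1(t),p_2(t))\in\{(\bar P,0),(0,\bar P),(0,0)\}$. *)

(* Defs.v *)
From mathcomp Require Import all_boot all_order all_algebra.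
From mathcomp Require Import all_classical all_reals all_analysis.
Set Implicit Arguments. Unset Strict Implicit. Unset Printing Implicit Defensive.
Import Order.TTheory GRing.Theory Num.Theory.
Local Open Scope ring_scope.
Local Open Scope classical_set_scope.

Definition log2 {R : realType} (x : R) : R := ln x / ln 2.

Definition gain {R : realType} (H b0 xk x : R) : R := b0 / ((x - xk) ^+ 2 + H ^+ 2).
Definition h1 {R : realType} (D H b0 x : R) : R := gain H b0 (- (D / 2)) x.
Definition h2 {R : realType} (D H b0 x : R) : R := gain H b0 (D / 2) x.

Definition feasible_traj {R : realType} (V T : R) (x : R -> R) : Prop :=
  forall s t, s \in `[0, T] -> t \in `[0, T] -> `|x t - x s| <= V * `|t - s|.

Definition feasible_power {R : realType} (Pbar T : R) (p1 p2 : R -> R) : Prop :=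
  measurable_fun `[0, T] p1 /\ measurable_fun `[0, T] p2 /\
  forall t, t \in `[0, T] -> 0 <= p1 t /\ 0 <= p2 t /\ p1 t + p2 t <= Pbar.

Definition tdma {R : realType} (Pbar T : R) (p1 p2 : R -> R) : Prop :=
  forall t, t \in `[0, T] ->
    (p1 t = Pbar /\ p2 t = 0) \/ (p1 t = 0 /\ p2 t = Pbar) \/ (p1 t = 0 /\ p2 t = 0).

Definition tspan {R : realType} (T : R) : set R := `[0, T].

Definition rate_region {R : realType} (D H b0 T : R) (x p1 p2 : R -> R) (r1 r2 : R)
  : Prop :=
  0 <= r1 /\ 0 <= r2 /\
  (r1%:E <= (T^-1)%:E *
     \int[@lebesgue_measure R]_(t in tspan T) (log2 (1 + p1 t * h1 D H b0 (x t)))%:E)%E /\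
  (r2%:E <= (T^-1)%:E *
     \int[@lebesgue_measure R]_(t in tspan T) (log2 (1 + p2 t * h2 D H b0 (x t)))%:E)%E /\
  ((r1 + r2)%:E <= (T^-1)%:E *
     \int[@lebesgue_measure R]_(t in tspan T)
        (log2 (1 + p1 t * h1 D H b0 (x t) + p2 t * h2 D H b0 (x t)))%:E)%E.

Definition cap_region {R : realType} (D H b0 V T Pbar : R) (r1 r2 : R) : Prop :=
  exists (x p1 p2 : R -> R),
    feasible_traj V T x /\ feasible_power Pbar T p1 p2 /\
    rate_region D H b0 T x p1 p2 r1 r2.

Definition hat_region {R : realType} (H b0 Pbar : R) (r1 r2 : R) : Prop :=
  0 <= r1 /\ 0 <= r2 /\ r1 + r2 <= log2 (1 + Pbar * b0 / H ^+ 2).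

(* hover-fly-hover trajectory with parameters xI, xF, tI, tF (T = tI + (xF-xI)/V + tF) *)
Definition hfh {R : realType} (V xI xF tI tF T : R) (t : R) : R :=
  if t <= tI then xI
  else if t < T - tF then xI + (t - tI) * V
  else xF.

(* Main.v *)
Require Import Defs.
From mathcomp Require Import all_boot all_order all_algebra.
From mathcomp Require Import all_classical all_reals all_analysis.
From mathcomp Require Import ring lra.
Import Order.TTheory GRing.Theory Num.Theory.
Local Open Scope ring_scope.
Local Open Scope classical_set_scope.

Section H.
Variable R : realType.
Local Notation mu := (@lebesgue_measure R).

Lemma ge0_le_int (D : set R) (f g : R -> \bar R) :
  (forall x, D x -> (0 <= f x)%E) -> (forall x, D x -> (f x <= g x)%E) ->
  (\int[mu]_(x in D) f x <= \int[mu]_(x in D) g x)%E.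
Proof.
move=> f0 fg.
have g0 : forall x, D x -> (0 <= g x)%E.
  by move=> x Dx; exact: le_trans (f0 x Dx) (fg x Dx).
rewrite !ge0_integralE//. apply: ereal_sup_le => _ [h hf <-].
exists h => //= x. apply: le_trans (hf x) _.
rewrite /patch; case: ifP => // /set_mem; exact: fg.
Qed.

Lemma int_cst_indic (a b T C : R) : 0 <= C -> 0 <= a -> a <= b -> b <= T ->
  (\int[mu]_(t in tspan T) (C * \1_(`[a, b]) t)%:E = (C * (b - a))%:E)%E.
Proof.
move=> C0 a0 ab bT.
rewrite /tspan.
have -> : (\int[mu]_(t in `[0%R, T]) (C * \1_(`[a, b]) t)%:E =
   C%:E * \int[mu]_(t in `[0%R, T]) (\1_(`[a, b]) t)%:E)%E.
  have HH := @integralZl_indic _ _ _ mu `[0%R, T] (measurable_itv _) (fun=> `[a, b]%classic) C.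
  apply: HH; last exact: measurable_itv.
  by move=> /lt_geF; rewrite C0.
rewrite integral_indic // setIidl; last first.
  move=> x /=; rewrite !in_itv /= => /andP[ax xb].
  by apply/andP; split; [exact: le_trans a0 ax|exact: le_trans xb bT].
have HH : mu `[a, b]%classic = (b - a)%:E.
  rewrite lebesgue_measure_itv /=.
  case: ltP => [_|ba]; first by rewrite -EFinD.
  move: ba; rewrite lee_fin => ba.
  have -> : b = a by apply/eqP; rewrite eq_le ab ba.
  by rewrite subrr.
transitivity (C%:E * (b - a)%:E)%E; last by rewrite -EFinM.
congr (_ * _)%E.
exact: HH.
Qed.


Lemma log2_le (x y : R) : 0 < x -> x <= y -> log2 x <= log2 y.
Proof.
move=> x0 xy; rewrite /log2 ler_wpM2r //.
  by rewrite invr_ge0 ln_ge0 // ler1n.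
by rewrite ler_ln // ?posrE // (lt_le_trans x0 xy).
Qed.

Lemma log2_ge0 (x : R) : 1 <= x -> 0 <= log2 x.
Proof. by move=> x1; rewrite /log2 divr_ge0 // ln_ge0 // ler1n. Qed.

Lemma log2_gt0 (x : R) : 1 < x -> 0 < log2 x.
Proof. by move=> x1; rewrite /log2 divr_gt0 // ln_gt0 // ltr1n. Qed.

Lemma log2_1 : log2 (1 : R) = 0.
Proof. by rewrite /log2 ln1 mul0r. Qed.

Lemma gain_ge0 (H b0 xk x : R) : 0 < H -> 0 < b0 -> 0 <= gain H b0 xk x.
Proof.
move=> H0 b00; apply: divr_ge0; first exact: ltW.
by rewrite addr_ge0 // sqr_ge0.
Qed.

Lemma gain_le (H b0 xk x : R) : 0 < H -> 0 < b0 -> gain H b0 xk x <= b0 / H ^+ 2.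
Proof.
move=> H0 b00; rewrite /gain; apply: ler_wpM2l; first exact: ltW.
rewrite lef_pV2 ?posrE ?exprn_gt0 //.
  by rewrite lerDr sqr_ge0.
by rewrite ltr_wpDl ?sqr_ge0 ?exprn_gt0.
Qed.

Lemma gain_at (H b0 xk : R) : gain H b0 xk xk = b0 / H ^+ 2.
Proof. by rewrite /gain subrr expr0n /= add0r. Qed.

Lemma hfh_lip (V xI xF tI tF T : R) : 0 < V -> tI <= T - tF ->
  xF = xI + (T - tF - tI) * V ->
  forall s t, `|hfh V xI xF tI tF T t - hfh V xI xF tI tF T s| <= V * `|t - s|.
Proof.
move=> V0 le1 exF.
have main : forall s t, s <= t ->
    0 <= hfh V xI xF tI tF T t - hfh V xI xF tI tF T s <= V * (t - s).
  move=> s t st; rewrite /hfh.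
  case: (leP t tI) => h1; case: (leP s tI) => h2;
  try case: (ltP t (T - tF)) => h3; try case: (ltP s (T - tF)) => h4;
  rewrite ?exF; apply/andP; split; nra.
move=> s t; case: (leP s t) => st.
  have /andP[a b] := main s t st.
  by rewrite ger0_norm // ger0_norm ?subr_ge0.
have /andP[a b] := main t s (ltW st).
rewrite distrC (distrC t) ger0_norm // ger0_norm ?subr_ge0 ?(ltW st) //.
Qed.
End H.
Arguments ge0_le_int {R}.
Arguments int_cst_indic {R}.
Arguments log2_le {R}.
Arguments log2_ge0 {R}.
Arguments log2_gt0 {R}.
Arguments log2_1 {R}.
Arguments gain_ge0 {R} H b0 xk x.
Arguments gain_le {R} H b0 xk x.
Arguments gain_at {R}.
Arguments hfh_lip {R}.
Lemma mem_icc (R : realType) (a b t : R) : (t \in `[a, b]) = (a <= t <= b)%R.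
Proof. by rewrite mem_setE in_itv. Qed.
Lemma indic_icc (R : realType) (a b t : R) : \1_(`[a, b]) t = (a <= t <= b)%R%:R :> R.
Proof. by rewrite indicE mem_icc. Qed.

Theorem theorem1 (R : realType) (D H b0 Pbar V : R) :
  0 < D -> 0 < H -> 0 < b0 -> 0 < Pbar -> 0 < V ->
  (* C(V,T,Pbar) is contained in hat C(Pbar) for every T > 0 *)
  (forall T r1 r2 : R, 0 < T ->
     cap_region D H b0 V T Pbar r1 r2 -> hat_region H b0 Pbar r1 r2) /\
  (* every point of hat C(Pbar) is the limit, as T -> oo, of rate pairs achieved by
     HFH trajectories with xI = -D/2, xF = D/2 and TDMA transmission *)
  (forall r1 r2 : R, hat_region H b0 Pbar r1 r2 ->
     forall eps : R, 0 < eps ->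
     exists T0 : R, forall T : R, T0 <= T ->
       exists (tI tF : R) (p1 p2 : R -> R) (s1 s2 : R),
         0 <= tI /\ 0 <= tF /\ tI + (D / 2 - - (D / 2)) / V + tF = T /\
         feasible_traj V T (hfh V (- (D / 2)) (D / 2) tI tF T) /\
         feasible_power Pbar T p1 p2 /\ tdma Pbar T p1 p2 /\
         rate_region D H b0 T (hfh V (- (D / 2)) (D / 2) tI tF T) p1 p2 s1 s2 /\
         `|s1 - r1| < eps /\ `|s2 - r2| < eps).
Proof.
move=> D0 H0 b00 P0 V0.
set G := b0 / H ^+ 2.
have G0 : 0 < G by rewrite divr_gt0 // exprn_gt0.
set C := log2 (1 + Pbar * b0 / H ^+ 2).
have CE : C = log2 (1 + Pbar * G) by rewrite /C /G mulrA.
have C0 : 0 < C by rewrite CE log2_gt0 // ltrDl mulr_gt0.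
split.
- move=> T r1 r2 T0 [x [p1 [p2 [_ [[_ [_ pb]] [r10 [r20 [_ [_ Hs]]]]]]]]].
  split => //; split => //.
  have key : (\int[@lebesgue_measure R]_(t in tspan T)
        (log2 (1 + p1 t * h1 D H b0 (x t) + p2 t * h2 D H b0 (x t)))%:E
        <= (C * T)%:E)%E.
    apply: le_trans (@ge0_le_int R _ _ (fun=> C%:E) _ _) _.
    + move=> t Dt; have [p10 [p20 psum]] := pb t (mem_set Dt).
      rewrite lee_fin; apply: log2_ge0.
      have g10 := gain_ge0 _ _ (- (D / 2)) (x t) H0 b00.
      have g20 := gain_ge0 _ _ (D / 2) (x t) H0 b00.
      rewrite /h1 /h2 in g10 g20 *.
      nra.
    + move=> t Dt; have [p10 [p20 psum]] := pb t (mem_set Dt).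
      rewrite lee_fin CE; apply: log2_le.
        have g10 := gain_ge0 _ _ (- (D / 2)) (x t) H0 b00.
        have g20 := gain_ge0 _ _ (D / 2) (x t) H0 b00.
        rewrite /h1 /h2 in g10 g20 *.
        nra.
      rewrite -addrA lerD2l.
      have g1 := gain_le _ _ (- (D / 2)) (x t) H0 b00.
      have g2 := gain_le _ _ (D / 2) (x t) H0 b00.
      have g10 := gain_ge0 _ _ (- (D / 2)) (x t) H0 b00.
      have g20 := gain_ge0 _ _ (D / 2) (x t) H0 b00.
      rewrite /h1 /h2 -/G in g1 g2 g10 g20 *.
      nra.
    + rewrite integral_cst /tspan; last exact: measurable_itv.
      have HH : (@lebesgue_measure R) (`[0%R, T]%classic) = T%:E.
        by rewrite lebesgue_measure_itv /= lte_fin T0 -EFinD subr0.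
      rewrite le_eqVlt; apply/orP; left; apply/eqP.
      transitivity (C%:E * T%:E)%E; last by rewrite -EFinM.
      congr (_ * _)%E; exact: HH.
  have Tinv : (0 <= (T^-1)%:E)%E by rewrite lee_fin invr_ge0 ltW.
  have := le_trans Hs (lee_wpmul2l Tinv key).
  by rewrite -EFinM lee_fin mulrCA mulVf ?mulr1 // gt_eqF.

- move=> r1 r2 [r10 [r20 r12]] eps eps0.
  rewrite -/C in r12.
  set W := D / V.
  have W0 : 0 < W by rewrite divr_gt0.
  set K := (r1 + r2 + 1) * W / eps.
  have K0 : 0 < K by rewrite divr_gt0 // mulr_gt0 // ltr_wpDl // addr_ge0.
  have epsK : eps * K = (r1 + r2 + 1) * W by rewrite mulrC divfK // gt_eqF.
  exists (W + K) => T TT0.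
  have T0 : 0 < T by lra.
  have ET : (r1 + r2 + 1) * W <= eps * T by rewrite -epsK; nra.
  set L := T - W.
  have L0 : 0 <= L by rewrite /L; lra.
  set tI := r1 / C * L.
  set tF := L - tI.
  have rC : r1 / C <= 1 by rewrite ler_pdivrMr // mul1r; lra.
  have tI0 : 0 <= tI by rewrite mulr_ge0 // divr_ge0 // ltW.
  have tIL : tI <= L by rewrite /tI -[leRHS]mul1r ler_wpM2r.
  have tF0 : 0 <= tF by rewrite subr_ge0.
  have eTF : T - tF = tI + W by rewrite /tF /L; lra.
  have CtI : C * tI = r1 * L by rewrite /tI mulrA mulrCA divff ?mulr1 // gt_eqF.
  set x := hfh V (- (D / 2)) (D / 2) tI tF T.
  set p1 := fun t => Pbar * \1_(`[0, tI]) t.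
  set p2 := fun t => Pbar * \1_(`[T - tF, T]) t.
  have E1 : forall t, log2 (1 + p1 t * h1 D H b0 (x t)) = C * \1_(`[0, tI]) t.
    move=> t; rewrite /p1 !indic_icc.
    case: (boolP (0 <= t <= tI)%R) => /= ht.
    - have tle : t <= tI by case/andP: ht.
      by rewrite /x /hfh tle /h1 gain_at !mulr1 CE.
    - by rewrite !mulr0 mul0r addr0 log2_1.
  have E2 : forall t, log2 (1 + p2 t * h2 D H b0 (x t)) = C * \1_(`[T - tF, T]) t.
    move=> t; rewrite /p2 !indic_icc.
    case: (boolP (T - tF <= t <= T)%R) => /= ht.
    - have tle : T - tF <= t by case/andP: ht.
      have n1 : (t <= tI) = false by apply/negbTE; rewrite -ltNge; lra.
      have n2 : (t < T - tF) = false by apply/negbTE; rewrite -leNgt.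
      by rewrite /x /hfh n1 n2 /h2 gain_at !mulr1 CE.
    - by rewrite !mulr0 mul0r addr0 log2_1.
  have disj : forall t, (0 <= t <= tI)%R -> (T - tF <= t <= T)%R -> False.
    by move=> t /andP[_ a] /andP[b _]; lra.
  have E3 : forall t, log2 (1 + p1 t * h1 D H b0 (x t) + p2 t * h2 D H b0 (x t)) =
      C * \1_(`[0, tI]) t + C * \1_(`[T - tF, T]) t.
    move=> t; case: (boolP (T - tF <= t <= T)%R) => h2t.
    - have h1t : ~~ (0 <= t <= tI)%R by apply/negP => /disj; apply.
      have -> : p1 t = 0 by rewrite /p1 indic_icc (negbTE h1t) mulr0.
      by rewrite mul0r addr0 E2 (indic_icc _ 0 tI t) (negbTE h1t) mulr0 add0r.
    - have -> : p2 t = 0 by rewrite /p2 indic_icc (negbTE h2t) mulr0.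
      by rewrite mul0r addr0 E1 (indic_icc _ (T - tF) T t) (negbTE h2t) mulr0 addr0.
  have mA1 : measurable_fun (tspan T) p1.
    by apply: measurable_realfun.measurable_funM; [exact: measurable_cst|apply: measurable_realfun.measurable_indic; exact: measurable_itv].
  have mA2 : measurable_fun (tspan T) p2.
    by apply: measurable_realfun.measurable_funM; [exact: measurable_cst|apply: measurable_realfun.measurable_indic; exact: measurable_itv].
  exists tI, tF, p1, p2, (r1 * L / T), (r2 * L / T).
  split => //; split => //; split.
    rewrite opprK -splitr -/W /tF /L; lra.
  split.
    move=> s t _ _; apply: hfh_lip => //; first by rewrite eTF; lra.
    rewrite eTF addrAC subrr add0r /W divfK ?gt_eqF //.
    by rewrite {3}(splitr D) addKr.
  split.
    split; first exact: mA1.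
    split; first exact: mA2.
    move=> t _; rewrite /p1 /p2 !indic_icc.
    case: (boolP (0 <= t <= tI)%R) => h1t; case: (boolP (T - tF <= t <= T)%R) => h2t /=.
    + by exfalso; exact: disj h1t h2t.
    + by rewrite mulr1 mulr0; split; [|split]; lra.
    + by rewrite mulr1 mulr0; split; [|split]; lra.
    + by rewrite mulr0; split; [|split]; lra.
  split.
    move=> t _; rewrite /p1 /p2 !indic_icc.
    case: (boolP (0 <= t <= tI)%R) => h1t; case: (boolP (T - tF <= t <= T)%R) => h2t /=.
    + by exfalso; exact: disj h1t h2t.
    + by left; rewrite mulr1 mulr0.
    + by right; left; rewrite mulr1 mulr0.
    + by right; right; rewrite mulr0.
  have sTinv : 0 <= T^-1 by rewrite invr_ge0 ltW.
  have C0' : 0 <= C := ltW C0.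
  have tIT : tI <= T by rewrite /L in tIL; lra.
  have tF1 : 0 <= T - tF by rewrite eTF; lra.
  have tF2 : T - tF <= T by lra.
  have lT : T <= T := lexx T.
  have l00 : (0:R) <= 0 := lexx 0.
  have CtF : C * tF = (C - r1) * L by rewrite /tF mulrBr CtI mulrBl.
  split.
    split; first by rewrite divr_ge0 ?mulr_ge0 // ltW.
    split; first by rewrite divr_ge0 ?mulr_ge0 // ltW.
    split.
      under eq_integral => t _ do rewrite E1.
      rewrite (int_cst_indic 0 tI T C) //.
      rewrite -EFinM lee_fin subr0 CtI.
      by rewrite mulrC mulrA.
    split.
      under eq_integral => t _ do rewrite E2.
      rewrite (int_cst_indic (T - tF) T T C) //.
      rewrite -EFinM lee_fin opprB addrCA subrr addr0.
      rewrite [leRHS]mulrC; apply: ler_wpM2r => //; rewrite CtF.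
      by apply: ler_wpM2r => //; lra.
    under eq_integral => t _ do rewrite E3 EFinD.
    rewrite ge0_integralD //; first last.
    + by apply/measurable_realfun.measurable_EFinP; apply: measurable_realfun.measurable_funM; [exact: measurable_cst|apply: measurable_realfun.measurable_indic; exact: measurable_itv].
    + by move=> t _; rewrite lee_fin mulr_ge0 // indic_icc ler0n.
    + by apply/measurable_realfun.measurable_EFinP; apply: measurable_realfun.measurable_funM; [exact: measurable_cst|apply: measurable_realfun.measurable_indic; exact: measurable_itv].
    + by move=> t _; rewrite lee_fin mulr_ge0 // indic_icc ler0n.
    + exact: measurable_itv.
    rewrite (int_cst_indic 0 tI T C) //.
    rewrite (int_cst_indic (T - tF) T T C) //.
    rewrite -EFinD -EFinM lee_fin subr0 opprB addrCA subrr addr0.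
    rewrite -mulrDl -mulrDl [leRHS]mulrC; apply: ler_wpM2r => //; rewrite CtF CtI -mulrDl.
    by apply: ler_wpM2r => //; lra.
  have key : forall r, 0 <= r -> r <= r1 + r2 -> `|r * L / T - r| < eps.
    move=> r r0 rr.
    have -> : r * L / T - r = - (r * W / T).
      by rewrite /L; field; rewrite gt_eqF.
    have rW : 0 <= r * W / T.
      by apply: divr_ge0; [apply: mulr_ge0 => //; exact: ltW | exact: ltW].
    rewrite normrN ger0_norm // ltr_pdivrMr //.
    nra.
  by split; apply: key => //; lra.
Qed.
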